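(* There exists a constant $c>0$ such that for all even positive integers $n,m$, every eigenvalue $\lambda$ of the $nm\times nm$ Laplacian matrix $$\mathbf{L}=\mathbf{I}_n\otimes\big(\mathbf{D}^{(2)}_m+\mathbf{T}_{\sin^2}^{-1}\mathbf{T}_{\cos\sin}\mathbf{D}_m\big)+\mathbf{D}^{(2)}_n\otimes \mathbf{T}_{\sin^2}^{-1}$$ satisfies $|\lambda|\le c\,(n^2m^2+m^3)$. That is, $|\lambda_{\max}(\mathbf{L})|=\mathcal{O}(n^2m^2+m^3)$.
   Context: Here $\otimes$ is the Kronecker product and $\mathbf{I}_n$ is the $n\times n$ identity. For an even integer $m$: - $\mathbf{D}_m=\mathrm{diag}\big(i\cdot(0,-m/2+1,-m/2+2,\ldots,m/2-1)\big)$ ($m\times m$, $i=\sqrt{-1}$). - $\mathbf{D}^{(2)}_m=\mathrm{diag}\big(-j^2\big)_{j=-m/2}^{m/2-1}$; $\mathbf{D}^{(2)}_n$ is defined in the same way with $n$ in place of $m$. - $\mathbf{P}$ is the $(m+1)\times m$ matrix with $\mathbf{P}_{1,1}=\mathbf{P}_{m+1,1}=1/2$, $\mathbf{P}_{j,j}=1$ for $2\le j\le m$, and all other entries zero. - $\mathbf{Q}$ is the $m\times(m+5)$ matrix with $\mathbf{Q}_{j,j+2}=1$ for $1\le j\le m$, $\mathbf{Q}_{1,m+3}=1$, and all other entries zero. - $\mathbf{M}_{\sin^2}$ is the $(m+5)\times(m+5)$ symmetric Toeplitz matrix with $1/2$ on the main diagonal, $-1/4$ in entries $(r,r\pm2)$,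 and zeros elsewhere. - $\mathbf{M}_{\cos\sin}$ is the $(m+5)\times(m+5)$ Toeplitz matrix with entries $(r,r+2)$ equal to $i/4$, entries $(r+2,r)$ equal to $-i/4$, and zeros elsewhere. - $\mathbf{M}(:,3{:}m{+}3)$ denotes the submatrix of columns $3$ through $m+3$. - $\mathbf{T}_{\sin^2}=\mathbf{Q}\,\mathbf{M}_{\sin^2}(:,3{:}m{+}3)\,\mathbf{P}$ and $\mathbf{T}_{\cos\sin}=\mathbf{Q}\,\mathbf{M}_{\cos\sin}(:,3{:}m{+}3)\,\mathbf{P}$ (both $m\times m$). The matrix $\mathbf{T}_{\sin^2}$ is invertible, so $\mathbf{L}$ is well defined. *)

(* Defs.v *)
(* Kronecker product = mathcomp-real-closed's [tensmx]
   (standard ordering: index (i1,i2) |-> i1 * p + i2). *)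
From HB Require Import structures.
From mathcomp Require Import all_boot all_order all_algebra.
From mathcomp Require Import mxtens zify.
Set Implicit Arguments. Unset Strict Implicit. Unset Printing Implicit Defensive.
Import Order.TTheory GRing.Theory Num.Theory.
Local Open Scope ring_scope.

Section Defs.
Variable C : numClosedFieldType.

(* All indices below are 0-based: the paper's index j corresponds to j-1. *)

Definition Dm (m : nat) : 'M[C]_m :=
  \matrix_(j < m, k < m)
    (if j == k then (if j == 0%N :> nat then 0 else 'i * (j%:R - m%:R / 2)) else 0).

Definition D2 (m : nat) : 'M[C]_m :=
  \matrix_(j < m, k < m) (if j == k then - (j%:R - m%:R / 2) ^+ 2 else 0).

Definition Pmx (m : nat) : 'M[C]_(m.+1, m) :=
  \matrix_(r < m.+1, s < m)
    (if ((r == 0%N :> nat) || (r == m :> nat)) && (s == 0%N :> nat) then 2^-1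
     else if (r == s :> nat) && (1 <= r)%N && (r <= m.-1)%N then 1 else 0).

Definition Qmx (m : nat) : 'M[C]_(m, m + 5) :=
  \matrix_(r < m, s < m + 5)
    (if (s == (r + 2)%N :> nat) || ((r == 0%N :> nat) && (s == (m + 2)%N :> nat)) then 1 else 0).

Definition Msin2 (m : nat) : 'M[C]_(m + 5) :=
  \matrix_(r < m + 5, s < m + 5)
    (if r == s :> nat then 2^-1
     else if (s == (r + 2)%N :> nat) || (r == (s + 2)%N :> nat) then - 4^-1 else 0).

Definition Mcossin (m : nat) : 'M[C]_(m + 5) :=
  \matrix_(r < m + 5, s < m + 5)
    (if s == (r + 2)%N :> nat then 'i / 4
     else if r == (s + 2)%N :> nat then - ('i / 4) else 0).

(* M(:, 3:m+3): the m+1 columns with paper indices 3..m+3 (0-based 2..m+2) *)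
Lemma colsel_proof (m : nat) (k : 'I_(m.+1)) : (k + 2 < m + 5)%N.
Proof. case: k => k /= Hk; lia. Qed.

Definition colsel (m : nat) (k : 'I_(m.+1)) : 'I_(m + 5) := Ordinal (colsel_proof k).

Definition cols3 (m : nat) (M : 'M[C]_(m + 5)) : 'M[C]_(m + 5, m.+1) :=
  colsub (@colsel m) M.

Definition Tsin2 (m : nat) : 'M[C]_m := Qmx m *m cols3 (Msin2 m) *m Pmx m.
Definition Tcossin (m : nat) : 'M[C]_m := Qmx m *m cols3 (Mcossin m) *m Pmx m.

Definition Lmx (n m : nat) : 'M[C]_(n * m) :=
  tensmx (1%:M : 'M[C]_n) (D2 m + invmx (Tsin2 m) *m Tcossin m *m Dm m)
  + tensmx (D2 n) (invmx (Tsin2 m)).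

End Defs.

(* Main.v *)
Require Import Defs.
From HB Require Import structures.
From mathcomp Require Import all_boot all_order all_algebra.
From mathcomp Require Import mxtens.
From mathcomp Require Import ring zify.
Set Implicit Arguments. Unset Strict Implicit. Unset Printing Implicit Defensive.
Import Order.TTheory GRing.Theory Num.Theory.
Local Open Scope ring_scope.

Lemma dirichlet (R : numFieldType) (W : nat -> R) (N : nat) (F : R) :
  0 <= F -> W 0%N = 0 -> W N = 0 ->
  (forall k, (k.+1 < N)%N -> `|W k.+1 *+ 2 - W k - W k.+2| <= F) ->
  forall k, (k <= N)%N -> `|W k| <= (N * N)%:R *+ 2 * F.
Proof.
move=> F0 W0 WN hL.
pose D k := W k.+1 - W k.
have hD : forall k, (k < N)%N -> `|D k - D 0%N| <= k%:R * F.
  elim=> [|k IH] hk; first by rewrite subrr normr0 mul0r.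
  have e: D k.+1 - D 0%N = - (W k.+1 *+ 2 - W k - W k.+2) + (D k - D 0%N).
    by rewrite /D; ring.
  rewrite e; apply: le_trans (ler_normD _ _) _.
  rewrite normrN -natr1 mulrDl mul1r addrC lerD //; first exact: IH (ltnW hk).
  exact: hL.
have hsum : \sum_(k < N) D k = 0.
  by rewrite -(big_mkord xpredT) telescope_sumr // WN W0 subrr.
case: (posnP N) => [N0|Npos].
  by move=> k; rewrite N0 leqn0 => /eqP ->; rewrite W0 normr0 mul0rn mul0r.
have hD0 : `|D 0%N| <= N%:R * F.
  have e : N%:R * D 0%N = \sum_(k < N) (D 0%N - D k).
    by rewrite sumrB hsum subr0 sumr_const card_ord mulr_natl.
  have : `|N%:R * D 0%N| <= N%:R * (N%:R * F).
    rewrite e; apply: le_trans (ler_norm_sum _ _ _) _.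
    apply: (@le_trans _ _ (\sum_(k < N) N%:R * F)).
      apply: ler_sum => k _; rewrite distrC; apply: le_trans (hD _ (ltn_ord k)) _.
      by rewrite ler_wpM2r // ler_nat ltnW.
    by rewrite sumr_const card_ord !mulr_natl.
  by rewrite normrM normr_nat ler_pM2l // ltr0n.
have hDk : forall k, (k < N)%N -> `|D k| <= N%:R * F *+ 2.
  move=> k hk; have -> : D k = D 0%N + (D k - D 0%N) by ring.
  apply: le_trans (ler_normD _ _) _; rewrite mulr2n lerD //.
  by apply: le_trans (hD _ hk) _; rewrite ler_wpM2r // ler_nat ltnW.
move=> k hk.
have -> : W k = \sum_(j < k) D j.
  by rewrite -(big_mkord xpredT) telescope_sumr // W0 subr0.
apply: le_trans (ler_norm_sum _ _ _) _.
apply: (@le_trans _ _ (\sum_(j < k) N%:R * F *+ 2)).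
  apply: ler_sum => j _; apply: hDk; exact: leq_trans (ltn_ord j) hk.
rewrite sumr_const card_ord.
have -> : N%:R * F *+ 2 *+ k = (N * k * 2)%:R * F by ring.
have -> : (N * N)%:R *+ 2 * F = (N * N * 2)%:R * F by ring.
by rewrite ler_wpM2r // ler_nat; nia.
Qed.

Section S.
Variable C : numClosedFieldType.

Lemma pick_sum N (F : nat -> C) c :
  \sum_(i < N) (if (i:nat) == c then F i else 0) = if (c < N)%N then F c else 0.
Proof.
case: ltnP => hc.
  rewrite (bigD1 (Ordinal hc)) //= eqxx big1 ?addr0 // => i hi.
  rewrite ifF //; apply: contraNF hi => /eqP e; apply/eqP/val_inj.
  by rewrite /= e.
rewrite big1 // => i _; rewrite ifF //; apply/negbTE.
by rewrite neq_ltn (leq_trans (ltn_ord i) hc).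
Qed.

Definition rowN N (F : nat -> C) : 'rV[C]_N := \row_(j < N) F j.

Definition Mb m (al be ga : C) : 'M[C]_(m + 5) :=
  \matrix_(a, c) ((if (a:nat) == c then al else 0) + (if (c:nat) == (a + 2)%N then be else 0)
     + (if (a:nat) == (c + 2)%N then ga else 0)).

Lemma Msin2E m : Msin2 C m = Mb m (2^-1) (- 4^-1) (- 4^-1).
Proof.
apply/matrixP => a c; rewrite !mxE.
by repeat case: ifP; move=> *; rewrite ?addr0 ?add0r //; exfalso; lia.
Qed.

Lemma McossinE m : Mcossin C m = Mb m 0 ('i / 4) (- ('i / 4)).
Proof.
apply/matrixP => a c; rewrite !mxE.
by repeat case: ifP; move=> *; rewrite ?addr0 ?add0r //; exfalso; lia.
Qed.

Definition Wf m (X : nat -> C) (a : nat) : C :=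
  (if (2 <= a)%N then X (a - 2)%N else 0) + (if a == (m + 2)%N then X 0%N else 0).

Lemma mulQ m (X : nat -> C) : (0 < m)%N -> (forall k, (m <= k)%N -> X k = 0) ->
  rowN m X *m Qmx C m = rowN (m + 5) (Wf m X).
Proof.
move=> m0 hX; apply/rowP => a; rewrite !mxE.
transitivity (\sum_(i < m) ((if (i:nat) == (a - 2)%N then (if (2 <= a)%N then X i else 0) else 0)
   + (if (i:nat) == 0%N then (if (a:nat) == (m + 2)%N then X i else 0) else 0))).
  apply: eq_bigr => i _; rewrite !mxE.
  by repeat case: ifP; move=> *; rewrite ?mulr1 ?mulr0 ?addr0 ?add0r //; exfalso; lia.
rewrite big_split /= (pick_sum _ (fun i => if (2 <= a)%N then X i else 0)).
rewrite (pick_sum _ (fun i => if (a:nat) == (m + 2)%N then X i else 0)) m0 /Wf.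
case: ltnP => h //; rewrite add0r.
by rewrite (hX _ h) if_same add0r.
Qed.


Definition Zf (al be ga : C) (W : nat -> C) (b : nat) : C :=
  al * W (b + 2)%N + be * W b + ga * W (b + 4)%N.

Lemma mulC3 m (W : nat -> C) al be ga :
  rowN (m + 5) W *m cols3 (Mb m al be ga) = rowN m.+1 (Zf al be ga W).
Proof.
apply/rowP => b; rewrite !mxE.
transitivity (\sum_(a < m + 5) ((if (a:nat) == (b + 2)%N then al * W a else 0)
   + (if (a:nat) == b then be * W a else 0) + (if (a:nat) == (b + 4)%N then ga * W a else 0))).
  apply: eq_bigr => a _; rewrite !mxE /=.
  by repeat case: ifP; move=> *; rewrite ?mulr0 ?mul0r ?addr0 ?add0r ?(mulrC (W a)) //; try (exfalso; lia); apply: mul0r.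
rewrite !big_split /= (pick_sum _ (fun a => al * W a)) (pick_sum _ (fun a => be * W a)).
rewrite (pick_sum _ (fun a => ga * W a)) /Zf.
have hb := ltn_ord b.
by rewrite !ifT //; lia.
Qed.

Lemma mulP m (Z : nat -> C) : (0 < m)%N ->
  rowN m.+1 Z *m Pmx C m = rowN m (fun s => if s == 0%N then (Z 0%N + Z m) / 2 else Z s).
Proof.
move=> m0; apply/rowP => s; rewrite !mxE.
transitivity (\sum_(b < m.+1) ((if (b:nat) == 0%N then (if (s:nat) == 0%N then Z b / 2 else 0) else 0)
   + (if (b:nat) == m then (if (s:nat) == 0%N then Z b / 2 else 0) else 0)
   + (if (b:nat) == s then (if (s:nat) == 0%N then 0 else Z b) else 0))).
  apply: eq_bigr => b _; rewrite !mxE /=.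
  have hs := ltn_ord s; have hb := ltn_ord b.
  by repeat case: ifP; move=> *; rewrite ?mulr0 ?mul0r ?mulr1 ?addr0 ?add0r //; exfalso; lia.
rewrite !big_split /= (pick_sum _ (fun b => if (s:nat) == 0%N then Z b / 2 else 0)).
rewrite (pick_sum _ (fun b => if (s:nat) == 0%N then Z b / 2 else 0)).
rewrite (pick_sum _ (fun b => if (s:nat) == 0%N then 0 else Z b)).
have hs := ltn_ord s.
have h1 : (s < m.+1)%N by lia.
rewrite ltn0Sn ltnSn h1.
have [e|ne] := boolP ((s:nat) == 0%N).
  by rewrite addr0 mulrDl.
by rewrite !add0r.
Qed.


Definition ZT m X := Zf (2^-1) (- 4^-1) (- 4^-1) (Wf m X).

Lemma ZT_gen m X s : (1 <= s < m)%N ->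
  4 * ZT m X s = X s *+ 2 - (if (2 <= s)%N then X (s - 2)%N else 0) - X (s + 2)%N
     - (if (s + 2 == m)%N then X 0%N else 0).
Proof.
move=> hs; rewrite /ZT /Zf /Wf.
rewrite (_ : (2 <= s + 2)%N = true); last by lia.
rewrite (_ : (s + 2 == m + 2)%N = false); last by lia.
rewrite (_ : (s == m + 2)%N = false); last by lia.
rewrite (_ : (2 <= s + 4)%N = true); last by lia.
rewrite (_ : (s + 4 == m + 2)%N = (s + 2 == m)%N); last by lia.
rewrite (_ : (s + 2 - 2 = s)%N); last by lia.
rewrite (_ : (s + 4 - 2 = s + 2)%N); last by lia.
by field.
Qed.


Lemma ZT_0 m X : (0 < m)%N ->
  4 * ZT m X 0%N = X 0%N *+ 2 - X 2%N - (if (m == 2)%N then X 0%N else 0).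
Proof.
move=> hm; rewrite /ZT /Zf /Wf /=.
rewrite (_ : (0 + 2 == m + 2)%N = false); last by lia.
rewrite (_ : (0 == m + 2)%N = false); last by lia.
rewrite (_ : (0 + 4 == m + 2)%N = (m == 2)%N); last by lia.
by field.
Qed.

Lemma ZT_m m X : (2 <= m)%N -> X m = 0 -> X (m + 2)%N = 0 ->
  4 * ZT m X m = X 0%N *+ 2 - X (m - 2)%N.
Proof.
move=> hm h1 h2; rewrite /ZT /Zf /Wf.
rewrite (_ : (2 <= m + 2)%N = true); last by lia.
rewrite (_ : (m + 2 == m + 2)%N = true); last by lia.
rewrite (_ : (2 <= m)%N = true); last by lia.
rewrite (_ : (m == m + 2)%N = false); last by lia.
rewrite (_ : (2 <= m + 4)%N = true); last by lia.
rewrite (_ : (m + 4 == m + 2)%N = false); last by lia.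
rewrite (_ : (m + 2 - 2 = m)%N); last by lia.
rewrite (_ : (m + 4 - 2 = m + 2)%N); last by lia.
rewrite h1 h2.
by field.
Qed.

Definition YT m X (s : nat) := if s == 0%N then (ZT m X 0%N + ZT m X m) / 2 else ZT m X s.

Definition Xf m (x : 'rV[C]_m) (k : nat) : C := \sum_(i < m) (if (i:nat) == k then x 0 i else 0).

Lemma XfE m (x : 'rV[C]_m) (j : 'I_m) : Xf x j = x 0 j.
Proof.
rewrite /Xf (bigD1 j) //= eqxx big1 ?addr0 // => i hi.
rewrite ifF //; apply: contraNF hi => /eqP e; apply/eqP/val_inj.
by rewrite /= e.
Qed.

Lemma Xf_out m (x : 'rV[C]_m) k : (m <= k)%N -> Xf x k = 0.
Proof.
move=> hk; rewrite /Xf big1 // => i _; rewrite ifF //; apply/negbTE.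
by rewrite neq_ltn (leq_trans (ltn_ord i) hk).
Qed.

Definition Tg m al be ga : 'M[C]_m := Qmx C m *m cols3 (Mb m al be ga) *m Pmx C m.

Lemma Tg_form m (x : 'rV[C]_m) al be ga : (0 < m)%N ->
  x *m Tg m al be ga = rowN m (fun s => if s == 0%N then
     (Zf al be ga (Wf m (Xf x)) 0%N + Zf al be ga (Wf m (Xf x)) m) / 2
     else Zf al be ga (Wf m (Xf x)) s).
Proof.
move=> hm.
have e : x = rowN m (Xf x) by apply/rowP => j; rewrite !mxE XfE.
rewrite {1}e.
rewrite /Tg !mulmxA mulQ //; last by move=> k; apply: Xf_out.
by rewrite mulC3 mulP.
Qed.

Lemma Tsin2E m : Tsin2 C m = Tg m (2^-1) (- 4^-1) (- 4^-1).
Proof. by rewrite /Tsin2 /Tg Msin2E. Qed.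

Lemma Tcossin_E m : Tcossin C m = Tg m 0 ('i / 4) (- ('i / 4)).
Proof. by rewrite /Tcossin /Tg McossinE. Qed.

Lemma Tsin2_form m (x : 'rV[C]_m) (s : 'I_m) : (0 < m)%N ->
  (x *m Tsin2 C m) 0 s = YT m (Xf x) s.
Proof. by move=> hm; rewrite Tsin2E Tg_form // mxE. Qed.


Lemma natY (a b : nat) (Y : C) : 0 <= Y -> (a <= b)%N -> a%:R * Y <= b%:R * Y.
Proof. by move=> Y0 hab; rewrite ler_wpM2r // ler_nat. Qed.

Lemma keyT p (X : nat -> C) (Y : C) : (0 < p)%N ->
  (forall k, (p.*2 <= k)%N -> X k = 0) -> 0 <= Y ->
  (forall s, (s < p.*2)%N -> `|YT p.*2 X s| <= Y) ->
  forall k, `|X k| <= (p.*2 ^ 2 * 8)%:R * Y.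
Proof.
move=> p0 hX Y0 hY.
set m := p.*2.
have m2 : (2 <= m)%N by rewrite /m; lia.
have hZ : forall s, (1 <= s < m)%N -> `|4 * ZT m X s| <= 4 * Y.
  move=> s hs; rewrite normrM normr_nat ler_wpM2l //.
  have := hY s (proj2 (andP hs)); rewrite /YT ifF //; lia.
pose Od j := if j == 0%N then 0 else X (j.*2.-1).
have hOd := @dirichlet C Od p.+1 (4 * Y).
have hOd' : forall j, (j <= p.+1)%N -> `|Od j| <= (p.+1 * p.+1)%:R *+ 2 * (4 * Y).
  apply: hOd => //; first by rewrite mulr_ge0.
    by rewrite /Od /=; rewrite hX //; rewrite /m; lia.
  move=> k hk; have := hZ k.*2.+1; rewrite ZT_gen; last by rewrite /m; lia.
  rewrite (_ : (k.*2.+1 + 2 == m)%N = false); last by rewrite /m; lia.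
  rewrite /Od /= (_ : (k.*2.+1 + 2)%N = k.+2.*2.-1); last by lia.
  case: k hk => [|k] hk /=.
    by rewrite !subr0 => h; apply: h; rewrite /m; lia.
  rewrite (_ : (k.+1.*2.+1 - 2)%N = k.*2.+1); last by lia.
  by rewrite !subr0 => h; apply: h; rewrite /m; lia.
pose Ev j := if (j < p)%N then X j.*2 - X 0%N else 0.
have hEv : forall j, (j <= p)%N -> `|Ev j| <= (p * p)%:R *+ 2 * (4 * Y).
  apply: (@dirichlet C Ev p (4 * Y)) => //; first by rewrite mulr_ge0.
      by rewrite /Ev p0 /= subrr.
    by rewrite /Ev ltnn.
  move=> k hk; have := hZ k.+1.*2; rewrite ZT_gen; last by rewrite /m; lia.
  rewrite (_ : (2 <= k.+1.*2)%N = true); last by lia.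
  rewrite (_ : (k.+1.*2 - 2)%N = k.*2); last by lia.
  rewrite (_ : (k.+1.*2 + 2)%N = k.+2.*2); last by lia.
  rewrite /Ev hk (_ : (k < p)%N = true); last by lia.
  case: (ltnP k.+2 p) => h2.
    rewrite (_ : (k.+2.*2 == m) = false); last by rewrite /m; lia.
    move=> h; apply: le_trans (h _); last by rewrite /m; lia.
    by rewrite le_eqVlt; apply/orP; left; apply/eqP; congr (`|_|); ring.
  rewrite (_ : (k.+2.*2 == m) = true); last by rewrite /m; lia.
  rewrite (hX k.+2.*2); last by lia.
  move=> h; apply: le_trans (h _); last by rewrite /m; lia.
  by rewrite le_eqVlt; apply/orP; left; apply/eqP; congr (`|_|); ring.
set B := (p * p)%:R *+ 2 * (4 * Y).
have B0 : 0 <= B by rewrite /B mulr_ge0 ?mulr_ge0 // mulrn_wge0.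
have hX0 : `|X 0%N| <= 4 * Y + B.
  have e : X 0%N *+ 2 = 4 * ZT m X 0%N + 4 * ZT m X m + Ev 1%N + Ev p.-1.
    rewrite ZT_0 ?ZT_m //; try (by rewrite /m; lia); try (by apply: hX; rewrite /m; lia).
    rewrite /Ev.
    have [p1|p2] : p = 1%N \/ (2 <= p)%N by lia.
      rewrite (_ : (1 < p)%N = false); last by lia.
      rewrite (_ : p.-1 = 0%N); last by lia.
      rewrite p0 (_ : (m == 2)%N = true); last by rewrite /m; lia.
      rewrite (_ : (m - 2)%N = 0%N); last by rewrite /m; lia.
      rewrite /= (hX 2%N); last by rewrite /m; lia.
      ring.
    rewrite (_ : (1 < p)%N = true); last by lia.
    rewrite (_ : (p.-1 < p)%N = true); last by lia.
    rewrite (_ : (m == 2)%N = false); last by rewrite /m; lia.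
    rewrite (_ : (m - 2)%N = p.-1.*2); last by rewrite /m; lia.
    rewrite /=; ring.
  have h8 : `|4 * ZT m X 0%N + 4 * ZT m X m| <= 8 * Y.
    have -> : 4 * ZT m X 0%N + 4 * ZT m X m = 8 * YT m X 0%N by rewrite /YT /=; field.
    by rewrite normrM normr_nat ler_wpM2l // hY; rewrite /m; lia.
  have : `|X 0%N *+ 2| <= 8 * Y + B + B.
    rewrite e; apply: le_trans (ler_normD _ _) _; apply: lerD; last by apply: hEv; lia.
    apply: le_trans (ler_normD _ _) _; apply: lerD => //; apply: hEv; lia.
  rewrite -(mulr_natl (X 0%N) 2) normrM normr_nat => h.
  rewrite -(@ler_pM2l _ 2) ?ltr0n //; apply: le_trans h _.
  rewrite le_eqVlt; apply/orP; left; apply/eqP; ring.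
move=> k; case: (ltnP k m) => hk; last first.
  by rewrite hX // normr0 mulr_ge0 // ler0n.
have := odd_double_half k; case: (odd k) => /= ek.
  have -> : X k = Od (k./2).+1 by rewrite /Od /= -{1}ek add1n.
  apply: le_trans (hOd' _ _) _; first by rewrite /m in hk; lia.
  have -> : (p.+1 * p.+1)%:R *+ 2 * (4 * Y) = (p.+1 * p.+1 * 2 * 4)%:R * Y by rewrite !natrM; ring.
  by apply: natY => //; rewrite /m; nia.
have -> : X k = Ev k./2 + X 0%N.
  rewrite /Ev (_ : (k./2 < p)%N = true); last by rewrite /m in hk; lia.
  by rewrite -{1}ek add0n subrK.
apply: le_trans (ler_normD _ _) _.
apply: le_trans (lerD (hEv _ _) hX0) _; first by rewrite /m in hk; lia.
have -> : (p * p)%:R *+ 2 * (4 * Y) + (4 * Y + B) = (p * p * 16 + 4)%:R * Y.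
  by rewrite /B natrD !natrM; ring.
by apply: natY => //; rewrite /m; nia.
Qed.

End S.

Section S2.
Variable C : numClosedFieldType.

Definition blk n m (v : 'rV[C]_(n * m)) (i : 'I_n) : 'rV[C]_m :=
  \row_l v 0 (mxtens_index (i, l)).

Lemma sum_tens n m (f : 'I_(n * m) -> C) :
  \sum_t f t = \sum_(j < n) \sum_(l < m) f (mxtens_index (j, l)).
Proof.
rewrite pair_big /=.
rewrite (reindex (@mxtens_index n m)) /=; last first.
  by exists (@mxtens_unindex n m) => t _; rewrite (mxtens_indexK, mxtens_unindexK).
by apply: eq_bigr => -[j l].
Qed.

Lemma blk_mul n m (v : 'rV[C]_(n * m)) (X : 'M[C]_n) (Y : 'M[C]_m) i k :
  (forall j i, j != i -> X j i = 0) ->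
  (v *m (X *t Y)) 0 (mxtens_index (i, k)) = X i i * (blk v i *m Y) 0 k.
Proof.
move=> hX; rewrite mxE sum_tens (bigD1 i) //= [X in _ + X = _]big1 ?addr0.
  rewrite mxE mulr_sumr; apply: eq_bigr => l _.
  by rewrite tensmxE !mxE mulrCA mulrA.
move=> j hj; apply: big1 => l _.
by rewrite tensmxE hX // mul0r mulr0.
Qed.


Lemma Tinv_bound m (x : 'rV[C]_m) (Y : C) : (0 < m)%N -> ~~ odd m -> 0 <= Y ->
  (forall s, `|(x *m Tsin2 C m) 0 s| <= Y) -> forall j, `|x 0 j| <= (m ^ 2 * 8)%:R * Y.
Proof.
move=> m0 em Y0 hY j.
have [p ep] : exists p, m = p.*2.
  by exists m./2; rewrite -{1}(odd_double_half m) (negbTE em) add0n.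
subst m; rewrite -XfE.
apply: (@keyT C p (Xf x) Y _ _ Y0 _ j).
- by move: m0; rewrite double_gt0.
- by move=> k; apply: Xf_out.
- move=> s hs; have := hY (Ordinal hs).
  by rewrite Tsin2_form.
Qed.

Lemma Tsin2_unit m : (0 < m)%N -> ~~ odd m -> Tsin2 C m \in unitmx.
Proof.
move=> m0 em; rewrite -row_free_unit -kermx_eq0; apply/eqP/matrixP => i j.
set x := row i (kermx (Tsin2 C m)).
have hx : x *m Tsin2 C m = 0 by rewrite /x -row_mul mulmx_ker row0.
have := @Tinv_bound m x 0 m0 em (lexx 0).
rewrite hx mulr0 => h.
have h0 : forall s, `|(0 : 'rV[C]_m) 0 s| <= 0 by move=> s; rewrite mxE normr0.
have := h h0 j.
by rewrite normr_le0 !mxE => /eqP.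
Qed.

Lemma exists_max k (f : 'I_k.+1 -> C) : exists i, forall j, `|f j| <= `|f i|.
Proof.
suff : forall N, (N <= k)%N -> exists i : 'I_k.+1, forall j : 'I_k.+1, (j <= N)%N -> `|f j| <= `|f i|.
  by case/(_ k (leqnn k)) => i hi; exists i => j; apply: hi; rewrite -ltnS.
elim=> [|N IH] hN.
  exists ord0 => j; rewrite leqn0 => /eqP j0.
  by rewrite (_ : j = ord0) //; apply: val_inj.
case: (IH (ltnW hN)) => i hi.
have hN1 : (N.+1 < k.+1)%N by [].
case/orP: (real_leVge (normr_real (f (Ordinal hN1))) (normr_real (f i))) => h.
  exists i => j; rewrite leq_eqVlt => /orP [/eqP e|hj]; last exact: hi.
  by rewrite (_ : j = Ordinal hN1) //; apply: val_inj.
exists (Ordinal hN1) => j; rewrite leq_eqVlt => /orP [/eqP e|hj].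
  by rewrite (_ : j = Ordinal hN1) //; apply: val_inj.
exact: le_trans (hi _ hj) h.
Qed.


Lemma le_eqR (x y z : C) : y = z -> x <= y -> x <= z.
Proof. by move=> ->. Qed.

Lemma Tcs_bound m (u : 'rV[C]_m) (U : C) : (0 < m)%N -> 0 <= U ->
  (forall j, `|u 0 j| <= U) -> forall k, `|(u *m Tcossin C m) 0 k| <= U.
Proof.
move=> m0 U0 hu k; rewrite Tcossin_E Tg_form // mxE.
have hXf : forall k, `|Xf u k| <= U.
  move=> l; case: (ltnP l m) => hl; last by rewrite Xf_out // normr0.
  by have := XfE u (Ordinal hl); rewrite /= => ->.
have hW : forall a, `|Wf m (Xf u) a| <= U *+ 2.
  move=> a; rewrite /Wf mulr2n; apply: le_trans (ler_normD _ _) _.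
  by apply: lerD; case: ifP; rewrite ?normr0.
have hq : `|'i / 4 : C| = 4^-1 by rewrite normrM normCi mul1r normfV normr_nat.
have hZ : forall b, `|Zf 0 ('i / 4) (- ('i / 4)) (Wf m (Xf u)) b| <= U.
  move=> b; rewrite /Zf mul0r add0r; apply: le_trans (ler_normD _ _) _.
  rewrite !normrM normrN hq.
  apply: (@le_eqR _ (4^-1 * (U *+ 2) + 4^-1 * (U *+ 2))); first by field.
  by apply: lerD; rewrite ?normCi ?mul1r ?normfV ?normr_nat ler_wpM2l // invr_ge0 ler0n.
case: ifP => _ //.
rewrite normrM normfV normr_nat.
apply: (@le_eqR _ ((U + U) / 2)); first by field.
rewrite ler_wpM2r ?invr_ge0 ?ler0n //; apply: le_trans (ler_normD _ _) _.
exact: lerD.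
Qed.


Lemma exists_max' N (f : 'I_N -> C) (j0 : 'I_N) : exists i, forall j, `|f j| <= `|f i|.
Proof. by case: N f j0 => [|N] f j0; [case: j0|exact: exists_max]. Qed.

Lemma mul_diag N (x : 'rV[C]_N) (Y : 'M[C]_N) s :
  (forall a b, a != b -> Y a b = 0) -> (x *m Y) 0 s = x 0 s * Y s s.
Proof.
move=> hY; rewrite mxE (bigD1 s) //= big1 ?addr0 // => a ha.
by rewrite hY ?mulr0.
Qed.

Lemma nb (a b : nat) : (a <= b)%N -> `|a%:R - b%:R / 2 : C| <= (b * 2)%:R.
Proof.
move=> hab; apply: le_trans (ler_normB _ _) _.
rewrite normr_nat normrM normfV !normr_nat.
have -> : (b * 2)%:R = b%:R + b%:R :> C by rewrite natrM mulr_natr mulr2n.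
apply: lerD; first by rewrite ler_nat.
by rewrite ler_pdivrMr ?ltr0n // mulr_natr mulr2n lerDl ler0n.
Qed.

End S2.

Unset Implicit Arguments.

Theorem mainTheorem3 (C : numClosedFieldType) :
  exists c : C, 0 < c /\
    forall (n m : nat), (0 < n)%N -> ~~ odd n -> (0 < m)%N -> ~~ odd m ->
      forall lambda : C, eigenvalue (Lmx C n m) lambda ->
        `|lambda| <= c * ((n ^ 2 * m ^ 2 + m ^ 3)%N)%:R.
Proof.
exists 40%:R; split; first by rewrite ltr0n.
move=> n m n0 en m0 em lam /eigenvalueP [v hv vnz].
have Tu := @Tsin2_unit C m m0 em.
have [t vt] : exists t, v 0 t != 0.
  case: (pickP (fun t => v 0 t != 0)) => [t ht|h]; first by exists t.
  exfalso; move/negP: vnz; apply; apply/eqP/rowP => t; rewrite mxE.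
  by move/negbFE: (h t) => /eqP.
case: (mxtens_indexP t) vt => i k0 vt.
pose w := blk v i.
have wnz : w 0 k0 != 0 by rewrite /w mxE.
have hblk : forall k, (w *m (D2 C m + invmx (Tsin2 C m) *m Tcossin C m *m Dm C m)) 0 k
    + D2 C n i i * (w *m invmx (Tsin2 C m)) 0 k = lam * w 0 k.
  move=> k; have := congr1 (fun M : 'M[C]_(1, n * m) => M 0 (mxtens_index (i, k))) hv.
  rewrite /Lmx mulmxDr mxE blk_mul; last by move=> a b hab; rewrite !mxE (negbTE hab).
  rewrite blk_mul; last by move=> a b hab; rewrite !mxE (negbTE hab).
  by rewrite !mxE eqxx mul1r => ->.
pose u := w *m invmx (Tsin2 C m).
have wu : w = u *m Tsin2 C m by rewrite /u -mulmxA mulVmx // mulmx1.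
have [s hs] := exists_max' (fun j => w 0 j) k0.
pose Wm := `|w 0 s|.
have Wpos : 0 < Wm by apply: lt_le_trans (hs k0); rewrite normr_gt0.
have hu : forall j, `|u 0 j| <= (m ^ 2 * 8)%:R * Wm.
  apply: Tinv_bound => //; first exact: ltW.
  by move=> j; rewrite -wu; apply: hs.
have hucs := Tcs_bound m0 (mulr_ge0 (ler0n _ _) (ltW Wpos)) hu.
have := hblk s.
rewrite mulmxDr (mulmxA w (invmx (Tsin2 C m) *m Tcossin C m)) (mulmxA w (invmx (Tsin2 C m))) -/u mxE mul_diag; last by move=> a b hab; rewrite !mxE (negbTE hab).
rewrite mul_diag; last by move=> a b hab; rewrite !mxE (negbTE hab).
move=> e.
have hlam : `|lam| * Wm <= ((m * 2) ^ 2)%:R * Wm + (m ^ 2 * 8)%:R * Wm * (m * 2)%:R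
     + ((n * 2) ^ 2)%:R * ((m ^ 2 * 8)%:R * Wm).
  rewrite /Wm -normrM -e.
  apply: le_trans (ler_normD _ _) _; apply: lerD; last first.
    rewrite normrM; apply: ler_pM => //.
    rewrite !mxE eqxx normrN normrX natrX; apply: lerXn2r; rewrite ?nnegrE //.
    exact: (@nb C _ _) (ltnW (ltn_ord i)).
  apply: le_trans (ler_normD _ _) _; apply: lerD.
    rewrite normrM mulrC; apply: ler_wpM2r => //.
    rewrite !mxE eqxx normrN normrX natrX; apply: lerXn2r; rewrite ?nnegrE //.
    exact: (@nb C _ _) (ltnW (ltn_ord s)).
  rewrite normrM; apply: ler_pM => //.
  rewrite !mxE eqxx; case: ifP => _; first by rewrite normr0 ler0n.
  rewrite normrM normCi mul1r.
  exact: (@nb C _ _) (ltnW (ltn_ord s)).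
have e2 : ((m * 2) ^ 2)%:R * Wm + (m ^ 2 * 8)%:R * Wm * (m * 2)%:R
     + ((n * 2) ^ 2)%:R * ((m ^ 2 * 8)%:R * Wm)
   = ((m * 2) ^ 2 + m ^ 2 * 8 * (m * 2) + (n * 2) ^ 2 * (m ^ 2 * 8))%:R * Wm.
  by ring.
rewrite e2 in hlam.
rewrite -(ler_pM2r Wpos); apply: le_trans hlam _.
rewrite -natrM; apply: natY; first exact: ltW.
nia.
Qed.
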